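(* Under the hypotheses and notation of the HNAG method (Algorithm 1) for $f\in\mathcal S^{1,1}_{\mu,L}$ with minimizer $x^*$, the iterates satisfy \[ \sum_{i=0}^{\infty}\frac{1}{\lambda_i}\|\nabla f(x_i)\|^2\leqslant 2L\mathcal L_0,\qquad \min_{0\leqslant i\leqslant k}\|\nabla f(x_i)\|^2\leqslant\frac{2L\mathcal L_0}{\sum_{i=0}^k 1/\lambda_i},\qquad \|\nabla f(x_k)\|^2\leqslant 2L\mathcal L_0\lambda_k\ \ \forall k\geqslant0 . \]
   Context: $V$ is a real Hilbert space; $\mathcal S^{1,1}_{\mu,L}$ ($\mu\geqslant0$) is the set of continuously differentiable $\mu$-convex functions with $L$-Lipschitz gradient, where $\mu$-convex means $f(x)-f(y)-(p,x-y)\geqslant\frac\mu2\|x-y\|^2$ for all $x,y$, $p\in\partial f(y)$. Algorithm 1: given $\gamma_0>0$, $x_0,v_0\in V$, for $k\geqslant0$ set $\alpha_k=\sqrt{\gamma_k/L}$, $\beta_k=1/(L\alpha_k)$, $x_{k+1}=\frac{x_k+\alpha_kv_k-\alpha_k\beta_k\nabla f(x_k)}{1+\alpha_k}$, $v_{k+1}=\frac{\gamma_kv_k+\mu\alpha_kx_{k+1}-\alpha_k\nabla f(x_{k+1})}{\gamma_k+\mu\alpha_k}$, $\gamma_{k+1}=\frac{\gamma_k+\mu\alpha_k}{1+\alpha_k}$. Further $\lambda_0=1$, $\lambda_k=\prod_{i=0}^{k-1}(1+\alpha_i)^{-1}$, and $\mathcal L_0=f(x_0)-f(x^* )+\frac{\gamma_0}{2}\|v_0-x^*\|^2$.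 *)

(* Defs.v *)
From Stdlib Require Import Reals Lra.
Open Scope R_scope.

Record Hilbert := {
  hV :> Type;
  hzero : hV;
  hadd : hV -> hV -> hV;
  hopp : hV -> hV;
  hscal : R -> hV -> hV;
  hinner : hV -> hV -> R;
  hadd_assoc : forall x y z, hadd x (hadd y z) = hadd (hadd x y) z;
  hadd_comm : forall x y, hadd x y = hadd y x;
  hadd_0 : forall x, hadd x hzero = x;
  hadd_opp : forall x, hadd x (hopp x) = hzero;
  hscal_1 : forall x, hscal 1 x = x;
  hscal_assoc : forall a b x, hscal a (hscal b x) = hscal (a * b) x;
  hscal_distr_v : forall a x y, hscal a (hadd x y) = hadd (hscal a x) (hscal a y);
  hscal_distr_r : forall a b x, hscal (a + b) x = hadd (hscal a x) (hscal b x);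
  hinner_sym : forall x y, hinner x y = hinner y x;
  hinner_add_l : forall x y z, hinner (hadd x y) z = hinner x z + hinner y z;
  hinner_scal_l : forall a x y, hinner (hscal a x) y = a * hinner x y;
  hinner_pos : forall x, 0 <= hinner x x;
  hinner_def : forall x, hinner x x = 0 -> x = hzero;
  hcomplete : forall u : nat -> hV,
    (forall eps, eps > 0 -> exists N, forall m n, (m >= N)%nat -> (n >= N)%nat ->
        sqrt (hinner (hadd (u m) (hopp (u n))) (hadd (u m) (hopp (u n)))) < eps) ->
    exists l, forall eps, eps > 0 -> exists N, forall n, (n >= N)%nat ->
        sqrt (hinner (hadd (u n) (hopp l)) (hadd (u n) (hopp l))) < eps
}.

Arguments hzero {h}.
Arguments hadd {h}.
Arguments hopp {h}.
Arguments hscal {h}.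
Arguments hinner {h}.

Definition hsub {V : Hilbert} (x y : V) : V := hadd x (hopp y).
Definition hnorm {V : Hilbert} (x : V) : R := sqrt (hinner x x).

Definition is_gradient {V : Hilbert} (f : V -> R) (g : V -> V) : Prop :=
  forall x eps, eps > 0 -> exists delta, delta > 0 /\
    forall h : V, hnorm h < delta ->
      Rabs (f (hadd x h) - f x - hinner (g x) h) <= eps * hnorm h.

Definition continuous_map {V : Hilbert} (g : V -> V) : Prop :=
  forall x eps, eps > 0 -> exists delta, delta > 0 /\
    forall y : V, hnorm (hsub y x) < delta -> hnorm (hsub (g y) (g x)) < eps.

(* mu-convexity as in the paper, for a differentiable f: here the
   subdifferential at y is {grad f(y)}. *)
Definition mu_convex_grad {V : Hilbert} (mu : R) (f : V -> R) (g : V -> V) : Prop :=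
  forall x y : V,
    f x - f y - hinner (g y) (hsub x y) >= mu / 2 * (hnorm (hsub x y)) ^ 2.

Definition S11 {V : Hilbert} (mu L : R) (f : V -> R) (g : V -> V) : Prop :=
  is_gradient f g /\ continuous_map g /\
  (forall x y : V, hnorm (hsub (g x) (g y)) <= L * hnorm (hsub x y)) /\
  mu_convex_grad mu f g.

Definition hnag_step {V : Hilbert} (g : V -> V) (mu L : R)
    (s : V * V * R) : V * V * R :=
  let '(x, v, gam) := s in
  let alpha := sqrt (gam / L) in
  let beta := 1 / (L * alpha) in
  let x' := hscal (/ (1 + alpha))
              (hadd (hadd x (hscal alpha v)) (hscal (- (alpha * beta)) (g x))) in
  let v' := hscal (/ (gam + mu * alpha))
              (hadd (hadd (hscal gam v) (hscal (mu * alpha) x')) (hscal (- alpha) (g x'))) in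
  let gam' := (gam + mu * alpha) / (1 + alpha) in
  (x', v', gam').

Fixpoint hnag {V : Hilbert} (g : V -> V) (mu L gamma0 : R) (x0 v0 : V) (k : nat)
    : V * V * R :=
  match k with
  | O => (x0, v0, gamma0)
  | S k' => hnag_step g mu L (hnag g mu L gamma0 x0 v0 k')
  end.

Definition hnag_x {V : Hilbert} g mu L gamma0 (x0 v0 : V) k : V :=
  fst (fst (hnag g mu L gamma0 x0 v0 k)).
Definition hnag_gamma {V : Hilbert} g mu L gamma0 (x0 v0 : V) k : R :=
  snd (hnag g mu L gamma0 x0 v0 k).
Definition hnag_alpha {V : Hilbert} g mu L gamma0 (x0 v0 : V) k : R :=
  sqrt (hnag_gamma g mu L gamma0 x0 v0 k / L).

Fixpoint hnag_lambda {V : Hilbert} g mu L gamma0 (x0 v0 : V) (k : nat) : R :=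
  match k with
  | O => 1
  | S k' => hnag_lambda g mu L gamma0 x0 v0 k' / (1 + hnag_alpha g mu L gamma0 x0 v0 k')
  end.

Fixpoint min_upto (u : nat -> R) (k : nat) : R :=
  match k with
  | O => u O
  | S k' => Rmin (min_upto u k') (u (S k'))
  end.

(* Main.v *)
Require Import Defs.
From Stdlib Require Import Reals Lra Psatz.
Open Scope R_scope.

Section Tk.
Context {V : Hilbert}.

Lemma ip0l (z : V) : hinner hzero z = 0.
Proof.
  assert (H := hinner_add_l V hzero hzero z). rewrite hadd_0 in H. lra.
Qed.
Lemma ip_oppl (x z : V) : hinner (hopp x) z = - hinner x z.
Proof.
  assert (H := hinner_add_l V x (hopp x) z). rewrite hadd_opp, ip0l in H. lra.
Qed.
Lemma ip_addr (x y z : V) : hinner z (hadd x y) = hinner z x + hinner z y.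
Proof. rewrite !(hinner_sym V z). apply hinner_add_l. Qed.
Lemma ip_scalr a (x z : V) : hinner z (hscal a x) = a * hinner z x.
Proof. rewrite !(hinner_sym V z). apply hinner_scal_l. Qed.
Lemma ip_oppr (x z : V) : hinner z (hopp x) = - hinner z x.
Proof. rewrite !(hinner_sym V z). apply ip_oppl. Qed.
Lemma ip0r (z : V) : hinner z hzero = 0.
Proof. rewrite hinner_sym. apply ip0l. Qed.
Lemma nsq (x : V) : hnorm x ^ 2 = hinner x x.
Proof. unfold hnorm. apply pow2_sqrt, hinner_pos. Qed.
Lemma vec_eq (u w : V) : hinner (hsub u w) (hsub u w) = 0 -> u = w.
Proof.
  intro H. apply hinner_def in H. unfold hsub in H.
  rewrite <- (hadd_0 V u), <- (hadd_opp V w), (hadd_comm V w), hadd_assoc, H,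
    hadd_comm, hadd_0. reflexivity.
Qed.
End Tk.

Ltac expand :=
  unfold hsub in *;
  repeat (rewrite ?hinner_add_l, ?ip_addr, ?hinner_scal_l, ?ip_scalr, ?ip_oppl, ?ip_oppr,
     ?ip0l, ?ip0r in *).

Lemma test (V : Hilbert) (d : V) : hscal 0 d = hzero.
Proof. apply vec_eq. expand. ring. Qed.

Ltac symnorm := repeat match goal with |- context [hinner ?a ?b] =>
   match goal with |- context [hinner b a] => lazymatch a with b => fail | _ =>
      rewrite (hinner_sym _ b a) end end end.

Lemma lip_sq (V : Hilbert) (L : R) (g : V -> V) (HL : 0 < L)
  (Hl : forall x y : V, hnorm (hsub (g x) (g y)) <= L * hnorm (hsub x y)) x y :
  hinner (hsub (g x) (g y)) (hsub (g x) (g y)) <= L^2 * hinner (hsub x y) (hsub x y).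
Proof.
  rewrite <- !nsq. specialize (Hl x y).
  assert (0 <= hnorm (hsub (g x) (g y))) by apply sqrt_pos.
  assert (0 <= hnorm (hsub x y)) by apply sqrt_pos.
  nra.
Qed.

Lemma descent_n (V : Hilbert) (mu L : R) (f : V -> R) (g : V -> V)
  (Hmu : 0 <= mu) (HL : 0 < L)
  (Hl : forall x y : V, hnorm (hsub (g x) (g y)) <= L * hnorm (hsub x y))
  (Hc : mu_convex_grad mu f g) (x d : V) (n : nat) (Hn : (0 < n)%nat) :
  forall j : nat,
  f (hadd x (hscal (INR j / INR n) d)) - f x - INR j / INR n * hinner (g x) d
   <= L * hinner d d * INR j * (INR j + 1) / (2 * INR n ^ 2).
Proof.
  assert (Hn' : 0 < INR n) by (apply lt_0_INR; lia).
  induction j.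
  - assert (E : hadd x (hscal (INR 0 / INR n) d) = x).
    { apply vec_eq. expand. simpl. field_simplify; lra. }
    rewrite E. simpl. field_simplify; lra.
  - set (z := hadd x (hscal (INR j / INR n) d)) in *.
    set (z' := hadd x (hscal (INR (S j) / INR n) d)) in *.
    assert (H1 := Hc z z').
    assert (H2 := lip_sq V L g HL Hl z' x).
    set (c := L * (INR j + 1) / INR n).
    assert (Hc0 : 0 < c) by (unfold c; apply Rdiv_lt_0_compat; [apply Rmult_lt_0_compat; [lra| pose proof (pos_INR j); lra]| lra]).
    assert (H3 := hinner_pos V (hsub (hsub (g z') (g x)) (hscal c d))).
    assert (H4 : 0 <= mu / 2 * hnorm (hsub z z') ^ 2).
    { apply Rmult_le_pos; [lra| apply pow2_ge_0]. }
    assert (H5 := hinner_pos V d).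
    remember (g z') as G'. remember (g x) as G.
    unfold z, z' in *. expand. rewrite S_INR in *.
    revert H1 H2 H3 H4 H5 IHj. symnorm. intros.
    set (D := hinner d d) in *.
    set (a := hinner G' d) in *. set (b := hinner G d) in *.
    set (aa := hinner G' G') in *. set (ab := hinner G' G) in *. set (bb := hinner G G) in *.
    set (J := INR j) in *. set (N := INR n) in *.
    assert (H2' : aa - 2*ab + bb <= c^2 * D).
    { ring_simplify in H2. eapply Rle_trans; [exact H2|]. right; unfold c. field. lra. }
    assert (Hab : a - b <= c * D).
    { apply (Rmult_le_reg_l c); [lra|]. nra. }
    set (M := mu / 2 * _) in H1, H4.
    set (fz := f (hadd x (hscal (J / N) d))) in *.
    set (fz' := f (hadd x (hscal ((J + 1) / N) d))) in *.
    assert (E1 : J/N*a - (J+1)/N*a = -(a/N)) by (field; lra).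
    assert (Hm : fz' <= fz + a / N) by lra.
    assert (E2 : (J+1)/N*b = J/N*b + b/N) by (field; lra).
    assert (Hab' : a / N - b / N <= c * D / N).
    { unfold Rdiv. rewrite <- Rmult_minus_distr_r. apply Rmult_le_compat_r; [|lra].
      left; apply Rinv_0_lt_compat; lra. }
    assert (E3 : L * D * J * (J + 1) / (2 * N ^ 2) + c * D / N = L * D * (J + 1) * (J + 1 + 1) / (2 * N ^ 2)) by (unfold c; field; lra).
    lra.
Qed.

Lemma descent (V : Hilbert) (mu L : R) (f : V -> R) (g : V -> V)
  (Hmu : 0 <= mu) (HL : 0 < L)
  (Hl : forall x y : V, hnorm (hsub (g x) (g y)) <= L * hnorm (hsub x y))
  (Hc : mu_convex_grad mu f g) (x d : V) :
  f (hadd x d) <= f x + hinner (g x) d + L / 2 * hinner d d.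
Proof.
  assert (HD := hinner_pos V d).
  assert (Hn : forall n, (0 < n)%nat ->
    f (hadd x d) - f x - hinner (g x) d - L / 2 * hinner d d <= L * hinner d d / (2 * INR n)).
  { intros n Hn. assert (Hn' : 0 < INR n) by (apply lt_0_INR; lia).
    assert (H := descent_n V mu L f g Hmu HL Hl Hc x d n Hn n).
    assert (E : hadd x (hscal (INR n / INR n) d) = hadd x d).
    { apply vec_eq. expand. field_simplify; lra. }
    rewrite E in H. replace (INR n / INR n) with 1 in H by (field; lra).
    eapply Rle_trans in H; [|right; reflexivity]. 
    replace (L * hinner d d * INR n * (INR n + 1) / (2 * INR n ^ 2)) with
      (L / 2 * hinner d d + L * hinner d d / (2 * INR n)) in H by (field; lra).
    lra. }
  destruct (Rle_or_lt (f (hadd x d) - f x - hinner (g x) d - L / 2 * hinner d d) 0) as [H|H]; [lra|].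
  destruct (INR_archimed _ (L * hinner d d) H) as [n Hn1].
  destruct n as [|n]. { simpl in Hn1. assert (0 <= L * hinner d d) by nra. lra. }
  specialize (Hn (S n) ltac:(lia)).
  assert (Hn' : 0 < INR (S n)) by (apply lt_0_INR; lia).
  set (E := f (hadd x d) - f x - hinner (g x) d - L / 2 * hinner d d) in *.
  assert (E * INR (S n) <= L * hinner d d / 2).
  { apply (Rmult_le_compat_r (INR (S n))) in Hn; [|lra].
    replace (L * hinner d d / (2 * INR (S n)) * INR (S n)) with (L * hinner d d / 2) in Hn by (field; lra). lra. }
  assert (0 <= L * hinner d d) by nra. nra.
Qed.

Lemma cocoercive (V : Hilbert) (mu L : R) (f : V -> R) (g : V -> V)
  (Hmu : 0 <= mu) (HL : 0 < L)
  (Hl : forall x y : V, hnorm (hsub (g x) (g y)) <= L * hnorm (hsub x y))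
  (Hc : mu_convex_grad mu f g) (x y : V) :
  f x - f y - hinner (g y) (hsub x y) >= / (2 * L) * hinner (hsub (g x) (g y)) (hsub (g x) (g y)).
Proof.
  set (d := hscal (- / L) (hsub (g x) (g y))).
  assert (H1 := descent V mu L f g Hmu HL Hl Hc x d).
  assert (H2 := Hc (hadd x d) y).
  assert (H3 : 0 <= mu / 2 * hnorm (hsub (hadd x d) y) ^ 2).
  { apply Rmult_le_pos; [lra| apply pow2_ge_0]. }
  set (M := mu / 2 * _) in H2, H3.
  set (fxd := f (hadd x d)) in *.
  remember (g x) as G. remember (g y) as G'.
  unfold d in *. expand.
  revert H1 H2. symnorm. intros.
  set (a := hinner G G) in *. set (b := hinner G G') in *. set (c := hinner G' G') in *.
  set (p := hinner G x) in *. set (q := hinner G' x) in *. set (r := hinner G' y) in *.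
  assert (E : - / L * (- / L * a) - 2 * ( - / L * (- / L * b)) + - / L * (- / L * c) = /(L*L) * (a - 2*b + c)) by (field; lra).
  assert (E2 : / (2 * L) * (a - 2 * b + c) = /(L*L) * (a - 2*b + c) * (L / 2)) by (field; lra).
  ring_simplify in H1. ring_simplify in H2. ring_simplify.
  field_simplify in H1; try lra. field_simplify in H2; try lra. 
  clear E E2.
  assert (H1' : 2*L*fxd <= 2*f x*L - a + c).
  { apply (Rmult_le_compat_l (2*L)) in H1; [|lra]. replace (2 * L * ((2 * f x * L - a + c) / (2 * L))) with (2*f x*L - a + c) in H1 by (field; lra). exact H1. }
  assert (H2' : fxd * L - f y * L - q * L + L * r + b - c >= 0).
  { apply Rge_le in H2. apply (Rmult_le_compat_l L) in H2; [|lra].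
    replace (L * ((fxd * L - f y * L - q * L + L * r + b - c) / L)) with (fxd * L - f y * L - q * L + L * r + b - c) in H2 by (field; lra). nra. }
  apply Rle_ge. apply (Rmult_le_reg_l (2*L)); [lra|].
  replace (2 * L * (/ (2 * L) * a - 2 * / (2 * L) * b + / (2 * L) * c)) with (a - 2*b + c) by (field; lra).
  nra.
Qed.

Lemma onestep (V : Hilbert) (mu L : R) (f : V -> R) (g : V -> V)
  (Hmu : 0 <= mu) (HL : 0 < L)
  (Hl : forall x y : V, hnorm (hsub (g x) (g y)) <= L * hnorm (hsub x y))
  (Hc : mu_convex_grad mu f g) (y x v : V) (gam : R) (Hg : 0 < gam) :
  let alpha := sqrt (gam / L) in
  let beta := 1 / (L * alpha) in
  let x' := hscal (/ (1 + alpha))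
              (hadd (hadd x (hscal alpha v)) (hscal (- (alpha * beta)) (g x))) in
  let v' := hscal (/ (gam + mu * alpha))
              (hadd (hadd (hscal gam v) (hscal (mu * alpha) x')) (hscal (- alpha) (g x'))) in
  let gam' := (gam + mu * alpha) / (1 + alpha) in
  (1 + alpha) * (f x' - f y + gam' / 2 * hnorm (hsub v' y) ^ 2)
   <= f x - f y + gam / 2 * hnorm (hsub v y) ^ 2 - / (2 * L) * hnorm (g x) ^ 2.
Proof.
  intros alpha beta x' v' gam'.
  assert (Ha : 0 < alpha) by (apply sqrt_lt_R0, Rdiv_lt_0_compat; lra).
  assert (Ha2 : gam = L * alpha * alpha).
  { unfold alpha. rewrite Rmult_assoc, sqrt_sqrt; [field; lra| left; apply Rdiv_lt_0_compat; lra]. }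
  assert (H1 := Hc y x').
  assert (H2 := cocoercive V mu L f g Hmu HL Hl Hc x x').
  assert (H3 := hinner_pos V (hadd (hscal alpha (g x')) (hscal gam (hsub v' v)))).
  assert (H4 := hinner_pos V (hsub x' v')).
  rewrite nsq in H1. rewrite !nsq.
  apply Rge_le in H1. apply Rge_le in H2.
  set (fx' := f x') in *. set (fy := f y) in *. set (fx := f x) in *.
  remember (g x') as G'. remember (g x) as G.
  set (s1 := fy - fx' - hinner G' (hsub y x') - mu / 2 * hinner (hsub y x') (hsub y x')).
  set (s2 := fx - fx' - hinner G' (hsub x x') - / (2 * L) * hinner (hsub G G') (hsub G G')).
  assert (Hs1 : 0 <= s1) by (unfold s1; lra).
  assert (Hs2 : 0 <= s2) by (unfold s2; lra).
  set (s3 := hinner (hadd (hscal alpha G') (hscal gam (hsub v' v))) (hadd (hscal alpha G') (hscal gam (hsub v' v)))) in *.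
  set (s4 := hinner (hsub x' v') (hsub x' v')) in *.
  assert (K1 : 0 <= alpha * s1) by (apply Rmult_le_pos; lra).
  assert (K3 : 0 <= s3 / (2 * gam)) by (unfold Rdiv; apply Rmult_le_pos; [lra| left; apply Rinv_0_lt_compat; lra]).
  assert (K4 : 0 <= mu * alpha / 2 * s4) by (apply Rmult_le_pos; [|lra]; apply Rmult_le_pos; [|lra]; apply Rmult_le_pos; lra).
  enough (E : fx - fy + gam / 2 * hinner (hsub v y) (hsub v y) - / (2 * L) * hinner G G
    - (1 + alpha) * (fx' - fy + gam' / 2 * hinner (hsub v' y) (hsub v' y))
    = alpha * s1 + s2 + s3 / (2 * gam) + mu * alpha / 2 * s4). { lra. }
  clear H1 H2 Hs1 Hs2 K1 K3 K4 H3 H4.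
  unfold s1, s2, s3, s4, gam', v', x', beta. clearbody alpha. subst gam.
  expand. 
  repeat match goal with |- context [hinner ?a ?b] =>
   match goal with |- context [hinner b a] => lazymatch a with b => fail | _ =>
      rewrite (hinner_sym _ b a) end end end.
  assert (0 < L*alpha*alpha + mu*alpha) by nra.
  field. repeat split; lra.
Qed.

Theorem mainTheorem5 (V : Hilbert) (mu L : R) (f : V -> R) (g : V -> V)
  (gamma0 : R) (x0 v0 xstar : V)
  (Hmu : 0 <= mu) (HL : 0 < L) (Hf : S11 mu L f g)
  (Hmin : forall x : V, f xstar <= f x) (Hgamma0 : 0 < gamma0) :
  let x := hnag_x g mu L gamma0 x0 v0 in
  let lam := hnag_lambda g mu L gamma0 x0 v0 in
  let L0 := f x0 - f xstar + gamma0 / 2 * (hnorm (hsub v0 xstar)) ^ 2 in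
  (exists s, infinite_sum (fun i => / lam i * (hnorm (g (x i))) ^ 2) s
             /\ s <= 2 * L * L0) /\
  (forall k : nat,
     min_upto (fun i => (hnorm (g (x i))) ^ 2) k
       <= 2 * L * L0 / sum_f_R0 (fun i => / lam i) k) /\
  (forall k : nat, (hnorm (g (x k))) ^ 2 <= 2 * L * L0 * lam k).
Proof.
  destruct Hf as [_ [_ [Hl Hc]]].
  intros x lam L0.
  set (gm := hnag_gamma g mu L gamma0 x0 v0).
  set (vv := fun k => snd (fst (hnag g mu L gamma0 x0 v0 k))).
  set (al := hnag_alpha g mu L gamma0 x0 v0).
  set (Ly := fun k => f (x k) - f xstar + gm k / 2 * hnorm (hsub (vv k) xstar) ^ 2).
  assert (Hgm : forall k, 0 < gm k).
  { induction k as [|k IH]. { exact Hgamma0. }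
    unfold gm, hnag_gamma in *. simpl. destruct (hnag g mu L gamma0 x0 v0 k) as [[xk vk] gk].
    simpl in *. assert (0 < sqrt (gk / L)) by (apply sqrt_lt_R0, Rdiv_lt_0_compat; lra).
    apply Rdiv_lt_0_compat; [|lra]. assert (0 <= mu * sqrt (gk / L)) by nra. lra. }
  assert (Hal : forall k, 0 < al k).
  { intro k. apply sqrt_lt_R0, Rdiv_lt_0_compat; [apply Hgm|lra]. }
  assert (Hlam : forall k, 0 < lam k).
  { induction k as [|k IH]. { unfold lam; simpl; lra. }
    unfold lam in *. simpl. apply Rdiv_lt_0_compat; [exact IH|]. fold al. specialize (Hal k). lra. }
  assert (Hlam1 : forall k, lam (S k) = lam k / (1 + al k)) by reflexivity.
  assert (HLy : forall k, 0 <= Ly k).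
  { intro k. unfold Ly. specialize (Hmin (x k)). specialize (Hgm k).
    assert (0 <= gm k / 2 * hnorm (hsub (vv k) xstar) ^ 2).
    { apply Rmult_le_pos; [lra| apply pow2_ge_0]. } lra. }
  assert (Hstep : forall k, (1 + al k) * Ly (S k) <= Ly k - / (2 * L) * hnorm (g (x k)) ^ 2).
  { intro k. specialize (Hgm k). unfold Ly, al, x, vv, gm, hnag_alpha, hnag_x, hnag_gamma in *.
    simpl. destruct (hnag g mu L gamma0 x0 v0 k) as [[xk vk] gk]. simpl in *.
    apply (onestep V mu L f g Hmu HL Hl Hc xstar xk vk gk Hgm). }
  set (u := fun i => / lam i * hnorm (g (x i)) ^ 2).
  assert (Hu : forall i, 0 <= u i).
  { intro i. unfold u. apply Rmult_le_pos; [left; apply Rinv_0_lt_compat, Hlam| apply pow2_ge_0]. }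
  assert (HP : forall k, Ly (S k) / lam (S k) + / (2 * L) * sum_f_R0 u k <= L0).
  { assert (Q : forall k, Ly (S k) / lam (S k) <= Ly k / lam k - / (2 * L) * u k).
    { intro k. rewrite Hlam1. specialize (Hstep k). specialize (Hlam k). specialize (Hal k).
      unfold u.
      replace (Ly (S k) / (lam k / (1 + al k))) with ((1 + al k) * Ly (S k) / lam k) by (field; lra).
      replace (Ly k / lam k - / (2 * L) * (/ lam k * hnorm (g (x k)) ^ 2)) with
        ((Ly k - / (2 * L) * hnorm (g (x k)) ^ 2) / lam k) by (field; lra).
      unfold Rdiv. apply Rmult_le_compat_r; [left; apply Rinv_0_lt_compat; lra| exact Hstep]. }
    assert (E0 : Ly 0%nat / lam 0%nat = L0) by (unfold Ly, lam, L0, x, gm, vv, hnag_x, hnag_gamma; simpl; field).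
    induction k as [|k IH].
    - simpl. specialize (Q 0%nat). lra.
    - rewrite tech5. specialize (Q (S k)). lra. }
  assert (HS : forall k, sum_f_R0 u k <= 2 * L * L0).
  { intro k. specialize (HP k). assert (0 <= Ly (S k) / lam (S k)).
    { unfold Rdiv. apply Rmult_le_pos; [apply HLy| left; apply Rinv_0_lt_compat, Hlam]. }
    assert (/ (2 * L) * sum_f_R0 u k <= L0) by lra.
    apply (Rmult_le_compat_l (2 * L)) in H0; [|lra].
    replace (2 * L * (/ (2 * L) * sum_f_R0 u k)) with (sum_f_R0 u k) in H0 by (field; lra). lra. }
  split; [|split].
  - destruct (growing_cv (fun n => sum_f_R0 u n)) as [l Hl'].
    { intro n. simpl. specialize (Hu (S n)). lra. }
    { exists (2 * L * L0). intros y [n ->]. apply HS. }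
    exists l. split; [exact Hl'|].
    apply (Rle_cv_lim (Vn := fun _ => 2 * L * L0) HS Hl').
    intros eps Heps. exists 0%nat. intros. unfold Rdist. rewrite Rminus_diag, Rabs_R0. lra.
  - intro k. 
    assert (Hpos : 0 < sum_f_R0 (fun i => / lam i) k).
    { induction k as [|k IH]. { simpl. apply Rinv_0_lt_compat, Hlam. }
      rewrite tech5. assert (0 < / lam (S k)) by (apply Rinv_0_lt_compat, Hlam). lra. }
    set (m := min_upto (fun i => hnorm (g (x i)) ^ 2) k).
    assert (Hm : forall i, (i <= k)%nat -> m <= hnorm (g (x i)) ^ 2).
    { unfold m. clear Hpos HP HS. induction k as [|k IH]; intros i Hi.
      - replace i with 0%nat by lia. simpl. lra.
      - simpl. destruct (Nat.eq_dec i (S k)) as [->|Hne].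
        + apply Rmin_r.
        + eapply Rle_trans; [apply Rmin_l| apply IH; lia]. }
    assert (m * sum_f_R0 (fun i => / lam i) k <= sum_f_R0 u k).
    { rewrite scal_sum. apply sum_Rle. intros i Hi. unfold u.
      apply Rmult_le_compat_l; [left; apply Rinv_0_lt_compat, Hlam| apply Hm; exact Hi]. }
    specialize (HS k).
    apply (Rmult_le_reg_r (sum_f_R0 (fun i => / lam i) k)); [exact Hpos|].
    replace (2 * L * L0 / sum_f_R0 (fun i => / lam i) k * sum_f_R0 (fun i => / lam i) k) with (2 * L * L0) by (field; lra).
    lra.
  - intro k. assert (H : u k <= 2 * L * L0).
    { eapply Rle_trans; [|apply (HS k)]. destruct k as [|k]. { simpl; lra. }
      rewrite tech5. assert (0 <= sum_f_R0 u k).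
      { clear HS HP. induction k. simpl; apply Hu. rewrite tech5. specialize (Hu (S k)). lra. }
      lra. }
    unfold u in H. specialize (Hlam k).
    apply (Rmult_le_compat_l (lam k)) in H; [|lra].
    replace (lam k * (/ lam k * hnorm (g (x k)) ^ 2)) with (hnorm (g (x k)) ^ 2) in H by (field; lra).
    lra.
Qed.
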